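(* Let $\mathscr{H}$ be a $d$-dimensional complex Hilbert space and let $A=\{|a_j\rangle\}_{j=1}^{d}$ and $B=\{|b_k\rangle\}_{k=1}^{d}$ be two orthonormal bases of $\mathscr{H}$. Let $(A,B)$ denote the $d\times 2d$ matrix whose columns are $|a_1\rangle,\dots,|a_d\rangle,|b_1\rangle,\dots,|b_d\rangle$ (written in some fixed basis of $\mathscr{H}$). Then, for $s\in\{2,\dots,d+1\}$, the bases $A$ and $B$ are $s$-order incompatible if and only if $\operatorname{spark}(A,B)=s$.
   Context: Two orthonormal bases $A$ and $B$ of $\mathscr{H}$ are called $s$-order incompatible, for an integer $s\in\{2,\dots,d+1\}$, if: (1) for all nonempty subsets $S_A\subseteq A$ and $S_B\subseteq B$ with $|S_A|+|S_B|<s$ one has $\operatorname{span}(S_A)\cap\operatorname{span}(S_B)=\{0\}$; and (2) there exist subsets $S_A\subseteq A$, $S_B\subseteq B$ with $|S_A|+|S_B|=s$ such that $\operatorname{span}(S_A)\cap\operatorname{span}(S_B)\neq\{0\}$. Spans are over $\mathbb{C}$. The spark of a matrix $M$ is the smallest integer $k$ such that some set of $k$ columns of $M$ is linearly dependent. *)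

(* Defs.v *)
From HB Require Import structures.
From mathcomp Require Import all_boot all_order all_algebra.
Set Implicit Arguments. Unset Strict Implicit. Unset Printing Implicit Defensive.
Import Order.TTheory GRing.Theory Num.Theory.
Local Open Scope ring_scope.

(* The d-dimensional Hilbert space is modelled as column vectors 'cV[C]_d
   over a numeric algebraically closed field C (e.g. the complex numbers),
   with the standard inner product <u,v> = \sum_i (u i)^* (v i).
   A basis is stored as a d x d matrix whose j-th column is the j-th vector. *)

Section Defs.
Variable C : numClosedFieldType.

Definition orthonormal_basis (d : nat) (M : 'M[C]_d) : Prop :=
  forall j k : 'I_d, \sum_(i < d) (M i j)^* * M i k = (j == k)%:R.

Definition in_span (m n : nat) (M : 'M[C]_(m, n)) (S : {set 'I_n})
    (v : 'cV[C]_m) : Prop :=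
  exists c : 'I_n -> C, v = \sum_(j in S) c j *: col j M.

Definition spans_meet (d : nat) (A B : 'M[C]_d) (SA SB : {set 'I_d}) : Prop :=
  exists v : 'cV[C]_d, v != 0 /\ in_span A SA v /\ in_span B SB v.

Definition s_order_incompatible (d : nat) (A B : 'M[C]_d) (s : nat) : Prop :=
  (forall SA SB : {set 'I_d}, SA != set0 -> SB != set0 ->
      (#|SA| + #|SB| < s)%N -> ~ spans_meet A B SA SB) /\
  (exists SA SB : {set 'I_d}, (#|SA| + #|SB|)%N = s /\ spans_meet A B SA SB).

Definition cols_dependent (m n : nat) (M : 'M[C]_(m, n)) (T : {set 'I_n}) : Prop :=
  exists c : 'I_n -> C, (exists2 j, j \in T & c j != 0) /\
    \sum_(j in T) c j *: col j M = 0.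

Definition spark_is (m n : nat) (M : 'M[C]_(m, n)) (k : nat) : Prop :=
  (exists T : {set 'I_n}, #|T| = k /\ cols_dependent M T) /\
  (forall T : {set 'I_n}, (#|T| < k)%N -> ~ cols_dependent M T).
End Defs.

(* Main.v *)
Require Import Defs.
From HB Require Import structures.
From mathcomp Require Import all_boot all_order all_algebra.
Import Order.TTheory GRing.Theory Num.Theory.
Local Open Scope ring_scope.

Section Aux.
Variable C : numClosedFieldType.
Variable d : nat.

Lemma indep (A : 'M[C]_d) (S : {set 'I_d}) (c : 'I_d -> C) :
  orthonormal_basis A -> \sum_(j in S) c j *: col j A = 0 ->
  forall k, k \in S -> c k = 0.
Proof.
move=> oA H k kS.
have h i : \sum_(j in S) c j * A i j = 0.
  transitivity ((\sum_(j in S) c j *: col j A) i 0); last by rewrite H mxE.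
  by rewrite summxE; apply: eq_bigr => j _; rewrite !mxE.
have : \sum_(i < d) (A i k)^* * \sum_(j in S) c j * A i j = 0.
  by apply: big1 => i _; rewrite h mulr0.
under eq_bigr do rewrite mulr_sumr.
rewrite exchange_big /=.
under eq_bigr do (under eq_bigr do rewrite mulrCA; rewrite -mulr_sumr oA).
rewrite (bigD1 k) //= eqxx mulr1 big1 ?addr0 // => j /andP [_ jk].
by rewrite eq_sym (negbTE jk) mulr0.
Qed.

Definition TA (T : {set 'I_(d + d)}) : {set 'I_d} := [set j | lshift d j \in T].
Definition TB (T : {set 'I_(d + d)}) : {set 'I_d} := [set j | rshift d j \in T].

Lemma cardT (T : {set 'I_(d + d)}) : #|T| = (#|TA T| + #|TB T|)%N.
Proof.
rewrite -!sum1_card big_split_ord /=.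
by congr (_ + _)%N; apply: eq_bigl => j; rewrite inE.
Qed.

Lemma surjT (SA SB : {set 'I_d}) : exists T, TA T = SA /\ TB T = SB.
Proof.
exists [set i | match split i with inl j => j \in SA | inr j => j \in SB end].
split; apply/setP => j; rewrite !inE.
  by rewrite (unsplitK (inl _ j)).
by rewrite (unsplitK (inr _ j)).
Qed.

Lemma colL (A B : 'M[C]_d) j : col (lshift d j) (row_mx A B) = col j A.
Proof. by apply/matrixP => i k; rewrite !mxE (unsplitK (inl _ j)). Qed.
Lemma colR (A B : 'M[C]_d) j : col (rshift d j) (row_mx A B) = col j B.
Proof. by apply/matrixP => i k; rewrite !mxE (unsplitK (inr _ j)). Qed.

Lemma meet_ne (A B : 'M[C]_d) SA SB : spans_meet A B SA SB ->
  SA != set0 /\ SB != set0.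
Proof.
move=> [v [v0 [[a ha] [b hb]]]]; split; apply/negP => /eqP E.
  by move: v0; rewrite ha E big_set0 eqxx.
by move: v0; rewrite hb E big_set0 eqxx.
Qed.

Lemma key (A B : 'M[C]_d) (T : {set 'I_(d + d)}) :
  orthonormal_basis A -> orthonormal_basis B ->
  cols_dependent (row_mx A B) T <-> spans_meet A B (TA T) (TB T).
Proof.
move=> oA oB; split.
  move=> [c [[j0 j0T cj0] H]].
  move: H; rewrite big_split_ord /=.
  set v := (\sum_(i | _) _ *: col (lshift d i) _).
  set w := (\sum_(i | _) _ *: col (rshift d i) _).
  have ev : v = \sum_(j in TA T) c (lshift d j) *: col j A.
    by apply: eq_big => j; rewrite ?inE // colL.
  have ew : w = \sum_(j in TB T) c (rshift d j) *: col j B.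
    by apply: eq_big => j; rewrite ?inE // colR.
  move=> H; exists v; split; last split.
  - apply/negP => /eqP v0.
    have w0 : w = 0 by move/eqP: H; rewrite v0 add0r => /eqP.
    move: cj0 j0T; rewrite -(splitK j0); case: (split j0) => j /= cj jT.
      have := @indep A _ _ oA (etrans (esym ev) v0) j.
      by rewrite inE jT => /(_ isT) /eqP; rewrite (negbTE cj).
    have := @indep B _ _ oB (etrans (esym ew) w0) j.
    by rewrite inE jT => /(_ isT) /eqP; rewrite (negbTE cj).
  - by exists (fun j => c (lshift d j)).
  - exists (fun j => - c (rshift d j)).
    move/eqP: H; rewrite addr_eq0 => /eqP ->; rewrite ew -sumrN.
    by apply: eq_bigr => j _; rewrite scaleNr.
move=> [v [v0 [[a ha] [b hb]]]].
pose c i := match split i with inl j => a j | inr j => - b j end.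
exists c; split.
  case: (boolP [exists j in TA T, a j != 0]) => [/exists_inP [j jS aj]|/exists_inP nj].
    exists (lshift d j); first by move: jS; rewrite inE.
    by rewrite /c (unsplitK (inl _ j)).
  exfalso; move: v0; rewrite ha big1 ?eqxx // => j jS.
  have : ~~ (a j != 0) by apply/negP => h; apply: nj; exists j.
  by rewrite negbK => /eqP ->; rewrite scale0r.
rewrite big_split_ord /=.
have e1 : \sum_(i | lshift d i \in T) c (lshift d i) *: col (lshift d i) (row_mx A B) = v.
  rewrite ha; apply: eq_big => j; rewrite ?inE // => _.
  by rewrite colL /c (unsplitK (inl _ j)).
have e2 : \sum_(i | rshift d i \in T) c (rshift d i) *: col (rshift d i) (row_mx A B) = - v.
  rewrite hb -sumrN; apply: eq_big => j; rewrite ?inE // => _.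
  by rewrite colR /c (unsplitK (inr _ j)) scaleNr.
by rewrite e1 e2 subrr.
Qed.
End Aux.

Theorem mainTheorem1 (C : numClosedFieldType) (d : nat) (A B : 'M[C]_d) (s : nat) :
  orthonormal_basis A -> orthonormal_basis B ->
  (2 <= s <= d.+1)%N ->
  (s_order_incompatible A B s <-> spark_is (row_mx A B) s).
Proof.
move=> oA oB _; split.
  move=> [H1 [SA [SB [hs hm]]]]; split.
    have [T [eA eB]] := surjT _ SA SB.
    exists T; split; first by rewrite cardT eA eB.
    by apply/(key _ _ _ _ T oA oB); rewrite eA eB.
  move=> T hT /(key _ _ _ _ T oA oB) hm'.
  have [nA nB] := meet_ne _ _ _ _ _ _ hm'.
  by apply: (H1 _ _ nA nB _ hm'); rewrite -cardT.
move=> [[T [hT hd]] H2]; split.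
  move=> SA SB _ _ hlt hm.
  have [T' [eA eB]] := surjT _ SA SB.
  apply: (H2 T'); first by rewrite cardT eA eB.
  by apply/(key _ _ _ _ T' oA oB); rewrite eA eB.
exists (TA _ T), (TB _ T); split; first by rewrite -cardT.
exact/(key _ _ _ _ T oA oB).
Qed.
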